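(* Suppose that for every agent $i$ and every date $n$, the period utility $u_{in}$ is twice continuously differentiable on $\mathbb R_{++}$, satisfies $u_{in}'(x)>0$ and $u_{in}''(x)<0$ for every $x>0$, and satisfies $\lim_{x\to 0}u_{in}'(x)=+\infty$. Let $(\bar p,\bar x)$ be a competitive equilibrium of $\mathcal E^{N,\beta}$. Then for each agent $i\in I_N$ and each $m,n=1,\dots,N$, $$\frac{d\xi_{in}}{dp_m}(\bar p)=S_i(m,n)+M_i(m,n),$$ where $$S_i(m,n):=\frac{\bar r_{im}\bar r_{in}}{\bar r_i}-\frac{\bar r_{in}}{\bar p_n}\mathbf 1_{\{m=n\}},\qquad M_i(m,n):=\frac{\bar r_{in}}{\bar r_i}(\omega_{im}-\bar x_{im}).$$ Here $\bar r_{in}:=\frac{u_{in}'(\bar x_{in})}{-u_{in}''(\bar x_{in})}$ and $\bar r_i:=\bar r_{i0}+\sum_{n=1}^N\bar p_n\bar r_{in}$.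
   Context: $\mathcal E^{N,\beta}$ is a finite exchange economy with agents $I_N$ and dated commodities $0,1,\dots,N$. Agent $i$ has utility $U_i(x_i)=\sum_{n=0}^N\beta^n u_{in}(x_{in})$, $\beta\in(0,1)$, and endowment $\omega_i\in\mathbb R_+^{N+1}$. The price of commodity $0$ is one and $p=(p_1,\dots,p_N)$ are future prices; agent $i$ maximizes $U_i$ subject to $x_{i0}+\sum_{n=1}^N p_nx_{in}\le\omega_{i0}+\sum_{n=1}^N p_n\omega_{in}$, with Marshallian demand $\xi_i(p)$ (wealth evaluated at the endowment, so $d/dp_m$ is the total derivative including the endowment-wealth effect). A competitive equilibrium $(\bar p,\bar x)$ satisfies market clearing for future goods and $\bar x_i=\xi_i(\bar p)$. *)

(* Defs.v *)
From Stdlib Require Import Reals Lra.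
From Coquelicot Require Import Coquelicot.
Open Scope R_scope.

(* A bundle x for economy E^{N,beta} uses the coordinates 0..N;
   a price system p uses the coordinates 1..N (p 0 is ignored: the
   price of commodity 0 is normalized to one).
   Agents are indexed by i < nI (the finite set I_N).
   u i n : R -> R is the period utility u_{in}. *)

Definition sum1N (N : nat) (f : nat -> R) : R := sum_n_m f 1 N.

Definition Util (N : nat) (beta : R) (u : nat -> R -> R) (x : nat -> R) : R :=
  sum_n_m (fun n => beta ^ n * u n (x n)) 0 N.

Definition pos_prices (N : nat) (p : nat -> R) : Prop :=
  forall n, (1 <= n <= N)%nat -> 0 < p n.

Definition pos_bundle (N : nat) (x : nat -> R) : Prop :=
  forall n, (n <= N)%nat -> 0 < x n.

Definition budget (N : nat) (p w x : nat -> R) : Prop :=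
  x 0%nat + sum1N N (fun n => p n * x n) <= w 0%nat + sum1N N (fun n => p n * w n).

Definition is_demand (N : nat) (beta : R) (u : nat -> R -> R) (w : nat -> R)
    (xi : (nat -> R) -> (nat -> R)) : Prop :=
  forall p, pos_prices N p ->
    pos_bundle N (xi p) /\ budget N p w (xi p) /\
    forall y, pos_bundle N y -> budget N p w y ->
      Util N beta u y <= Util N beta u (xi p).

Definition competitive_equilibrium (N nI : nat)
    (omega : nat -> nat -> R) (xi : nat -> (nat -> R) -> (nat -> R))
    (pbar : nat -> R) (xbar : nat -> nat -> R) : Prop :=
  pos_prices N pbar /\
  (forall i, (i < nI)%nat -> forall n, (n <= N)%nat -> xbar i n = xi i pbar n) /\
  (forall n, (1 <= n <= N)%nat ->
     sum_n_m (fun i => xbar i n) 0 (nI - 1) = sum_n_m (fun i => omega i n) 0 (nI - 1)).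

Definition upd_price (p : nat -> R) (m : nat) (t : R) : nat -> R :=
  fun k => if Nat.eqb k m then t else p k.

Definition good_period_utility (v : R -> R) : Prop :=
  (forall x, 0 < x ->
     ex_derive v x /\ ex_derive (Derive v) x /\
     continuous (Derive_n v 2) x /\
     0 < Derive v x /\ Derive_n v 2 x < 0) /\
  filterlim (Derive v) (at_right 0) (Rbar_locally p_infty).

Definition rr (v : R -> R) (x : R) : R := Derive v x / (- Derive_n v 2 x).

(* Main.v *)
Require Import Defs.
From Stdlib Require Import Reals Lra Lia FunctionalExtensionality.
From Coquelicot Require Import Coquelicot.
Open Scope R_scope.

Lemma cont_eps (f : R -> R) x :
  continuity_pt f x <-> (forall e, 0 < e -> exists d, 0 < d /\ forall y, Rabs (y - x) < d -> Rabs (f y - f x) < e).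
Proof.
  split.
  - intros H e He. destruct (H e He) as [d [Hd Hy]]. exists d; split; [lra|].
    intros y Hy'. destruct (Req_dec y x) as [->|Hne].
    + rewrite Rminus_diag, Rabs_R0; lra.
    + apply (Hy y). split; [split; [exact I| auto]|]. simpl. unfold R_dist. exact Hy'.
  - intros H e He. destruct (H e He) as [d [Hd Hy]]. exists d; split; [lra|].
    intros y [_ Hy']. simpl in *. unfold R_dist in *. apply Hy. exact Hy'.
Qed.

Lemma cp_mult f g x : continuity_pt f x -> continuity_pt g x -> continuity_pt (fun t => f t * g t) x.
Proof. intros; exact (continuity_pt_mult f g x H H0). Qed.
Lemma cp_plus f g x : continuity_pt f x -> continuity_pt g x -> continuity_pt (fun t => f t + g t) x.
Proof. intros; exact (continuity_pt_plus f g x H H0). Qed.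
Lemma cp_minus f g x : continuity_pt f x -> continuity_pt g x -> continuity_pt (fun t => f t - g t) x.
Proof. intros; exact (continuity_pt_minus f g x H H0). Qed.
Lemma cp_div f g x : continuity_pt f x -> continuity_pt g x -> g x <> 0 -> continuity_pt (fun t => f t / g t) x.
Proof. intros; exact (continuity_pt_div f g x H H0 H1). Qed.
Lemma cp_const c x : continuity_pt (fun _ => c) x.
Proof. apply continuity_pt_const. intros a b; reflexivity. Qed.
Lemma cp_comp f g x : continuity_pt f x -> continuity_pt g (f x) -> continuity_pt (fun t => g (f t)) x.
Proof. intros; exact (continuity_pt_comp f g x H H0). Qed.
Lemma cp_local f g x d : 0 < d -> (forall y, Rabs (y - x) < d -> f y = g y) -> continuity_pt g x -> continuity_pt f x.
Proof.
  intros Hd Heq Hg. apply (proj2 (cont_eps f x)). intros e He. pose proof (proj1 (cont_eps g x) Hg) as Hg2.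
  destruct (Hg2 e He) as [d' [Hd' H']]. exists (Rmin d d'). split. apply Rmin_pos; lra.
  intros y Hy. rewrite (Heq y), (Heq x). apply H'. pose proof (Rmin_r d d'); lra.
  rewrite Rminus_diag, Rabs_R0; lra. pose proof (Rmin_l d d'); lra.
Qed.

Lemma ssum_plus (f g : nat -> R) a b : @eq R (sum_n_m (fun k => f k + g k) a b) (sum_n_m f a b + sum_n_m g a b).
Proof. exact (sum_n_m_plus f g a b). Qed.
Lemma ssum_mult (c : R) (f : nat -> R) a b : @eq R (sum_n_m (fun k => c * f k) a b) (c * sum_n_m f a b).
Proof. exact (sum_n_m_mult_l c f a b). Qed.
Lemma ssum_ext (f g : nat -> R) a b : (forall k, (a <= k <= b)%nat -> f k = g k) -> @eq R (sum_n_m f a b) (sum_n_m g a b).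
Proof. apply sum_n_m_ext_loc. Qed.
Lemma ssum_zero_loc (f : nat -> R) a b : (forall k, (a <= k <= b)%nat -> f k = 0) -> @eq R (sum_n_m f a b) (0).
Proof.
  intros H. rewrite (ssum_ext f (fun _ => zero)). apply (@sum_n_m_const_zero R_AbelianMonoid). exact H.
Qed.
Lemma ssum_single (c : nat -> R) a b j : (a <= j <= b)%nat ->
  (forall k, (a <= k <= b)%nat -> k <> j -> c k = 0) -> @eq R (sum_n_m c a b) (c j).
Proof.
  revert j. induction b as [|b IH]; intros j Hj H.
  - assert (a = 0%nat /\ j = 0%nat) as [-> ->] by lia. apply sum_n_n.
  - destruct (Nat.eq_dec j (S b)) as [->|Hne].
    + destruct (Nat.eq_dec a (S b)) as [->|Ha]. apply sum_n_n.
      rewrite sum_n_Sm by lia. rewrite (ssum_zero_loc c a b). change (0 + c (S b) = c (S b)). lra.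
      intros k Hk; apply H; lia.
    + rewrite sum_n_Sm by lia. rewrite (IH j) by (try lia; intros k Hk Hk'; apply H; lia).
      rewrite (H (S b)) by lia. change (c j + 0 = c j). lra.
Qed.
Lemma ssum_minus (f g : nat -> R) a b : @eq R (sum_n_m (fun k => f k - g k) a b) (sum_n_m f a b - sum_n_m g a b).
Proof.
  rewrite (ssum_ext (fun k => f k - g k) (fun k => f k + (-1) * g k)).
  rewrite ssum_plus, ssum_mult. lra. intros; ring.
Qed.
Lemma ssum_upd (f g : nat -> R) a b j : (a <= j <= b)%nat ->
  (forall k, (a <= k <= b)%nat -> k <> j -> g k = f k) -> @eq R (sum_n_m g a b) (sum_n_m f a b + (g j - f j)).
Proof.
  intros Hj H. assert (sum_n_m (fun k => g k - f k) a b = g j - f j).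
  { apply (ssum_single (fun k => g k - f k)); auto. intros k Hk Hk'. rewrite H; auto; ring. }
  rewrite ssum_minus in H0. lra.
Qed.
Lemma ssum_nonneg_loc (f : nat -> R) a b : (forall k, (a <= k <= b)%nat -> 0 <= f k) -> 0 <= sum_n_m f a b.
Proof.
  induction b as [|b IH]; intros H.
  - destruct a. rewrite sum_n_n. apply H; lia. rewrite sum_n_m_zero by lia. change (0 <= 0); lra.
  - destruct (Compare_dec.le_lt_dec a (S b)).
    + rewrite sum_n_Sm by lia. change (0 <= sum_n_m f a b + f (S b)).
      assert (0 <= sum_n_m f a b). { apply IH; intros; apply H; lia. }
      assert (0 <= f (S b)) by (apply H; lia). lra.
    + rewrite sum_n_m_zero by lia. change (0 <= 0); lra.
Qed.
Lemma ssum_nonneg_but (f : nat -> R) a b j : (a <= j <= b)%nat ->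
  (forall k, (a <= k <= b)%nat -> k <> j -> 0 <= f k) -> f j <= sum_n_m f a b.
Proof.
  intros Hj H. set (g := fun k => if Nat.eqb k j then 0 else f k).
  rewrite (ssum_upd g f a b j Hj).
  - unfold g at 2. rewrite Nat.eqb_refl.
    assert (0 <= sum_n_m g a b). { apply ssum_nonneg_loc. intros k Hk. unfold g.
      destruct (Nat.eqb_spec k j). lra. apply H; auto. }
    lra.
  - intros k _ Hk. unfold g. apply Nat.eqb_neq in Hk. now rewrite Hk.
Qed.

Section Util.
Variable v : R -> R.
Hypothesis Hv : good_period_utility v.

Lemma gd1 x : 0 < x -> is_derive v x (Derive v x).
Proof. intros Hx. apply Derive_correct. apply (proj1 Hv x Hx). Qed.
Lemma gd2 x : 0 < x -> is_derive (Derive v) x (Derive_n v 2 x).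
Proof. intros Hx. apply Derive_correct. apply (proj1 Hv x Hx). Qed.
Lemma gpos x : 0 < x -> 0 < Derive v x.
Proof. intros Hx. apply (proj1 Hv x Hx). Qed.
Lemma gneg x : 0 < x -> Derive_n v 2 x < 0.
Proof. intros Hx. apply (proj1 Hv x Hx). Qed.
Lemma gcont0 x : 0 < x -> continuity_pt v x.
Proof. intros Hx. apply derivable_continuous_pt. exists (Derive v x). apply is_derive_Reals, gd1, Hx. Qed.
Lemma gcont1 x : 0 < x -> continuity_pt (Derive v) x.
Proof. intros Hx. apply derivable_continuous_pt. exists (Derive_n v 2 x). apply is_derive_Reals, gd2, Hx. Qed.
Lemma gcont2 x : 0 < x -> continuity_pt (Derive_n v 2) x.
Proof. intros Hx. apply continuity_pt_filterlim. apply (proj1 Hv x Hx). Qed.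

Lemma mvt0 a b : 0 < a < b -> exists c, a <= c <= b /\ v b - v a = Derive v c * (b - a).
Proof.
  intros Hab. destruct (MVT_gen v a b (Derive v)) as [c [Hc Hc']].
  - intros x Hx. rewrite Rmin_left, Rmax_right in Hx by lra. apply gd1; lra.
  - intros x Hx. rewrite Rmin_left, Rmax_right in Hx by lra. apply gcont0; lra.
  - rewrite Rmin_left, Rmax_right in Hc by lra. exists c; auto.
Qed.
Lemma mvt1 a b : 0 < a < b -> exists c, a <= c <= b /\ Derive v b - Derive v a = Derive_n v 2 c * (b - a).
Proof.
  intros Hab. destruct (MVT_gen (Derive v) a b (Derive_n v 2)) as [c [Hc Hc']].
  - intros x Hx. rewrite Rmin_left, Rmax_right in Hx by lra. apply gd2; lra.
  - intros x Hx. rewrite Rmin_left, Rmax_right in Hx by lra. apply gcont1; lra.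
  - rewrite Rmin_left, Rmax_right in Hc by lra. exists c; auto.
Qed.
Lemma v_incr a b : 0 < a < b -> v a < v b.
Proof.
  intros H. destruct (mvt0 a b H) as [c [Hc E]]. pose proof (gpos c ltac:(lra)).
  assert (0 < Derive v c * (b - a)) by (apply Rmult_lt_0_compat; lra). lra.
Qed.
Lemma v1_decr a b : 0 < a < b -> Derive v b < Derive v a.
Proof.
  intros H. destruct (mvt1 a b H) as [c [Hc E]]. pose proof (gneg c ltac:(lra)).
  assert (0 < - Derive_n v 2 c * (b - a)) by (apply Rmult_lt_0_compat; lra). lra.
Qed.
Lemma v1_nonincr a b : 0 < a <= b -> Derive v b <= Derive v a.
Proof.
  intros H. destruct (Req_dec a b) as [->|Hne]. lra. left; apply v1_decr; lra.
Qed.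

Lemma lemAB x e : 0 < x -> 0 < e -> exists eta, 0 < eta /\
  (forall y, 0 < y -> Derive v y < Derive v x + eta -> x - e < y) /\
  (forall y, 0 < y -> Derive v x - eta < Derive v y -> y < x + e).
Proof.
  intros Hx He. set (c := - Derive_n v 2 x / 2). assert (Hc : 0 < c) by (unfold c; pose proof (gneg x Hx); lra).
  destruct (proj1 (cont_eps _ x) (gcont2 x Hx) c Hc) as [d0 [Hd0 Hd]].
  set (dl := Rmin e (Rmin (x/2) (d0/2))).
  assert (Hdl : 0 < dl /\ dl <= e /\ dl <= x/2 /\ dl <= d0/2).
  { unfold dl. repeat split. repeat apply Rmin_pos; lra. apply Rmin_l.
    eapply Rle_trans; [apply Rmin_r|apply Rmin_l]. eapply Rle_trans; [apply Rmin_r|apply Rmin_r]. }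
  exists (c * dl). split; [apply Rmult_lt_0_compat; lra|]. split.
  - intros y Hy Hlt. destruct (Rlt_le_dec (x - e) y) as [ok|bad]; auto. exfalso.
    destruct (mvt1 (x - dl) x ltac:(lra)) as [z [Hz E]].
    assert (Rabs (z - x) < d0) by (apply Rabs_def1; lra).
    specialize (Hd z H). apply Rabs_def2 in Hd. unfold c in Hd.
    pose proof (v1_nonincr y (x - dl) ltac:(lra)).
    assert (Derive_n v 2 z * dl < - c * dl) by (apply Rmult_lt_compat_r; unfold c; lra).
    replace (x - (x - dl)) with dl in E by ring. lra.
  - intros y Hy Hlt. destruct (Rlt_le_dec y (x + e)) as [ok|bad]; auto. exfalso.
    destruct (mvt1 x (x + dl) ltac:(lra)) as [z [Hz E]].
    assert (Rabs (z - x) < d0) by (apply Rabs_def1; lra).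
    specialize (Hd z H). apply Rabs_def2 in Hd. unfold c in Hd.
    pose proof (v1_nonincr (x + dl) y ltac:(lra)).
    assert (Derive_n v 2 z * dl < - c * dl) by (apply Rmult_lt_compat_r; unfold c; lra).
    replace (x + dl - x) with dl in E by ring. lra.
Qed.

Definition q (x y : R) : R :=
  if Req_EM_T y x then Derive_n v 2 x else (Derive v y - Derive v x) / (y - x).

Lemma q_eq x y : Derive v y - Derive v x = q x y * (y - x).
Proof. unfold q. destruct (Req_EM_T y x) as [->|Hne]. ring. field. lra. Qed.
Lemma q_neg x y : 0 < x -> 0 < y -> q x y < 0.
Proof.
  intros Hx Hy. destruct (Req_dec y x) as [->|Hne].
  { unfold q. destruct (Req_EM_T x x) as [_|C]; [apply gneg; auto|congruence]. }
  pose proof (q_eq x y) as E.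
  destruct (Rlt_le_dec y x).
  - pose proof (v1_decr y x ltac:(lra)). destruct (Rlt_le_dec (q x y) 0); auto.
    assert (q x y * (y - x) <= 0) by nra. lra.
  - pose proof (v1_decr x y ltac:(lra)). destruct (Rlt_le_dec (q x y) 0); auto.
    assert (q x y * (y - x) >= 0) by nra. lra.
Qed.
Lemma q_cont x : 0 < x -> continuity_pt (q x) x.
Proof.
  intros Hx. apply (proj2 (cont_eps _ x)). intros e He.
  pose proof (proj1 (is_derive_Reals _ _ _) (gd2 x Hx) e He) as [d Hd].
  exists d. split; [apply cond_pos|]. intros y Hy.
  unfold q at 2. destruct (Req_EM_T x x) as [_|C]; [|congruence].
  unfold q. destruct (Req_EM_T y x) as [->|Hne].
  - rewrite Rminus_diag, Rabs_R0; lra.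
  - specialize (Hd (y - x) ltac:(lra) Hy). replace (x + (y - x)) with y in Hd by ring. exact Hd.
Qed.
End Util.

Lemma cp_sum (f : nat -> R -> R) a b x : (forall k, (a <= k <= b)%nat -> continuity_pt (f k) x) ->
  continuity_pt (fun t => sum_n_m (fun k => f k t) a b) x.
Proof.
  induction b as [|b IH]; intros H.
  - destruct a.
    + apply (cp_local _ (f 0%nat) x 1). lra. intros y _. exact (sum_n_n (fun k => f k y) 0). apply H; lia.
    + apply (cp_local _ (fun _ => 0) x 1). lra. intros y _. exact (sum_n_m_zero (G:=R_AbelianMonoid) (fun k => f k y) (S a) 0 ltac:(lia)). apply cp_const.
  - destruct (Compare_dec.le_lt_dec a (S b)).
    + apply (cp_local _ (fun t => sum_n_m (fun k => f k t) a b + f (S b) t) x 1). lra.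
      intros y _. rewrite sum_n_Sm by lia. reflexivity.
      apply cp_plus. apply IH. intros; apply H; lia. apply H; lia.
    + apply (cp_local _ (fun _ => 0) x 1). lra. intros y _. exact (sum_n_m_zero (G:=R_AbelianMonoid) (fun k => f k y) a (S b) ltac:(lia)). apply cp_const.
Qed.

Lemma psi_der (b : R) (uk u0 : R -> R) (xk x0 pk : R) :
  is_derive uk xk (Derive uk xk) -> is_derive u0 x0 (Derive u0 x0) ->
  derivable_pt_lim (fun s => b * uk (xk + s) + u0 (x0 - pk * s)) 0
     (b * Derive uk xk - pk * Derive u0 x0).
Proof.
  intros H1 H2. apply is_derive_Reals.
  auto_derive.
  - replace (xk + 0) with xk by ring. replace (x0 + - (pk * 0)) with x0 by ring.
    split; [exists (Derive uk xk); exact H1|split; [exists (Derive u0 x0); exact H2|exact I]].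
  - replace (xk + 0) with xk by ring. replace (x0 + - (pk * 0)) with x0 by ring. change (fun x : R => uk x) with uk. change (fun x : R => u0 x) with u0. ring.
Qed.

Lemma util_upd N beta (u : nat -> R -> R) (x y : nat -> R) j : (j <= N)%nat ->
  (forall k, (k <= N)%nat -> k <> j -> y k = x k) ->
  Util N beta u y = Util N beta u x + (beta ^ j * u j (y j) - beta ^ j * u j (x j)).
Proof.
  intros Hj H. unfold Util. apply (ssum_upd (fun n => beta ^ n * u n (x n)) (fun n => beta ^ n * u n (y n))).
  lia. intros k Hk Hk'. rewrite H by lia. reflexivity.
Qed.

Lemma foc N beta (u : nat -> R -> R) (w : nat -> R) xi p :
  0 < beta -> (forall n, (n <= N)%nat -> good_period_utility (u n)) ->
  is_demand N beta u w xi -> pos_prices N p ->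
  (forall k, (1 <= k <= N)%nat -> beta ^ k * Derive (u k) (xi p k) = p k * Derive (u 0%nat) (xi p 0%nat)) /\
  xi p 0%nat + sum1N N (fun n => p n * xi p n) = w 0%nat + sum1N N (fun n => p n * w n).
Proof.
  intros Hb Hg Hd Hp. destruct (Hd p Hp) as [Hpos [Hbud Hmax]].
  set (x := xi p) in *.
  assert (Hx0 : 0 < x 0%nat) by (apply Hpos; lia).
  split.
  - intros k Hk. set (a := Rmin (x k) (x 0%nat / p k)).
    assert (Hpk : 0 < p k) by (apply Hp; lia).
    assert (Hxk : 0 < x k) by (apply Hpos; lia).
    assert (Ha : 0 < a) by (apply Rmin_pos; [lra| apply Rdiv_lt_0_compat; lra]).
    set (psi := fun s => beta ^ k * u k (x k + s) + u 0%nat (x 0%nat - p k * s)).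
    assert (Hmx : forall s, -a < s -> s < a -> psi s <= psi 0).
    { intros s Hs1 Hs2.
      set (z := fun j => if Nat.eqb j k then x k + s else x j).
      set (y := fun j => if Nat.eqb j 0 then x 0%nat - p k * s else z j).
      assert (Hs3 : s < x 0%nat / p k) by (pose proof (Rmin_r (x k) (x 0%nat / p k)); fold a in H; lra).
      assert (Hs4 : -x k < s) by (pose proof (Rmin_l (x k) (x 0%nat / p k)); fold a in H; lra).
      assert (Hps : p k * s < x 0%nat).
      { apply (Rmult_lt_compat_l (p k)) in Hs3; auto. field_simplify in Hs3; lra. }
      assert (Hk0 : Nat.eqb k 0 = false) by (apply Nat.eqb_neq; lia).
      assert (E1 : Util N beta u z = Util N beta u x + (beta ^ k * u k (z k) - beta ^ k * u k (x k))).
      { apply util_upd. lia. intros j _ Hj. unfold z. apply Nat.eqb_neq in Hj. now rewrite Hj. }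
      assert (E2 : Util N beta u y = Util N beta u z + (beta ^ 0 * u 0%nat (y 0%nat) - beta ^ 0 * u 0%nat (z 0%nat))).
      { apply util_upd. lia. intros j _ Hj. unfold y. apply Nat.eqb_neq in Hj. now rewrite Hj. }
      assert (Hyp : pos_bundle N y).
      { intros j Hj. unfold y, z. destruct (Nat.eqb_spec j 0). lra. destruct (Nat.eqb_spec j k). lra. apply Hpos; auto. }
      assert (Hyb : budget N p w y).
      { unfold budget in *. unfold sum1N in *.
        rewrite (ssum_upd (fun n => p n * x n) (fun n => p n * y n) 1 N k) by
          (first [lia | intros j Hj Hjk; unfold y, z; destruct (Nat.eqb_spec j 0); [lia|];
           apply Nat.eqb_neq in Hjk; now rewrite Hjk]).
        unfold y, z. rewrite Hk0, Nat.eqb_refl. simpl. rewrite Nat.eqb_refl. lra. }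
      pose proof (Hmax y Hyp Hyb). unfold psi.
      assert (Hk0p : Nat.eqb 0 k = false) by (apply Nat.eqb_neq; lia). unfold y, z in E2. rewrite Hk0p in E2. simpl in E2. unfold z in E1. rewrite Nat.eqb_refl in E1.
      replace (x k + 0) with (x k) by ring. replace (x 0%nat - p k * 0) with (x 0%nat) by ring.
      unfold y, z in H. lra. }
    pose proof (psi_der (beta ^ k) (u k) (u 0%nat) (x k) (x 0%nat) (p k)
       (gd1 _ (Hg k ltac:(lia)) _ Hxk) (gd1 _ (Hg 0%nat ltac:(lia)) _ Hx0)) as Hder.
    pose proof (deriv_maximum psi (-a) a 0 (exist _ _ Hder) ltac:(lra) ltac:(lra) Hmx) as H0.
    simpl in H0. lra.
  - destruct (Rle_lt_or_eq_dec _ _ Hbud) as [Hlt|Heq]; auto. exfalso.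
    set (s := w 0%nat + sum1N N (fun n => p n * w n) - (x 0%nat + sum1N N (fun n => p n * x n))).
    set (y := fun j => if Nat.eqb j 0 then x 0%nat + s else x j).
    assert (Hyp : pos_bundle N y).
    { intros j Hj. unfold y. destruct (Nat.eqb_spec j 0). unfold s; lra. apply Hpos; auto. }
    assert (Hyb : budget N p w y).
    { unfold budget. unfold sum1N. rewrite (ssum_ext (fun n => p n * y n) (fun n => p n * x n)).
      unfold y at 1. simpl. unfold s, sum1N. lra.
      intros j Hj. unfold y. destruct (Nat.eqb_spec j 0). lia. reflexivity. }
    pose proof (Hmax y Hyp Hyb).
    rewrite (util_upd N beta u x y 0) in H by (first [lia | intros j _ Hj; unfold y; apply Nat.eqb_neq in Hj; now rewrite Hj]).
    unfold y in H. simpl in H.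
    pose proof (v_incr _ (Hg 0%nat ltac:(lia)) (x 0%nat) (x 0%nat + s) ltac:(unfold s; lra)). lra.
Qed.

Lemma small_prod h c e : 0 < e -> Rabs h < e / (2 * (Rabs c + 1)) -> Rabs (h * c) < e / 2.
Proof.
  intros He Hh. rewrite Rabs_mult. pose proof (Rabs_pos h). pose proof (Rabs_pos c).
  assert (Rabs h * (Rabs c + 1) < e / 2).
  { apply (Rmult_lt_compat_r (Rabs c + 1)) in Hh; [|lra].
    replace (e / (2 * (Rabs c + 1)) * (Rabs c + 1)) with (e / 2) in Hh by (field; lra). exact Hh. }
  nra.
Qed.
Lemma small_lin h l b eta : 0 < b -> 0 <= l -> Rabs h < eta * b / (l + 1) -> Rabs h * l < eta * b.
Proof.
  intros Hb Hl Hh. pose proof (Rabs_pos h).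
  apply (Rmult_lt_compat_r (l + 1)) in Hh; [|lra].
  replace (eta * b / (l + 1) * (l + 1)) with (eta * b) in Hh by (field; lra). nra.
Qed.

Theorem lemma2 (N nI : nat) (beta : R)
  (u : nat -> nat -> R -> R) (omega : nat -> nat -> R)
  (xi : nat -> (nat -> R) -> (nat -> R))
  (pbar : nat -> R) (xbar : nat -> nat -> R) :
  0 < beta < 1 ->
  (forall i n, (i < nI)%nat -> (n <= N)%nat -> 0 <= omega i n) ->
  (forall i n, (i < nI)%nat -> (n <= N)%nat -> good_period_utility (u i n)) ->
  (forall i, (i < nI)%nat -> is_demand N beta (u i) (omega i) (xi i)) ->
  competitive_equilibrium N nI omega xi pbar xbar ->
  forall i m n, (i < nI)%nat -> (1 <= m <= N)%nat -> (1 <= n <= N)%nat ->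
    let r := fun k => rr (u i k) (xbar i k) in
    let ri := r 0%nat + sum1N N (fun k => pbar k * r k) in
    is_derive (fun t => xi i (upd_price pbar m t) n) (pbar m)
      ((r m * r n / ri - (if Nat.eqb m n then r n / pbar n else 0))
       + r n / ri * (omega i m - xbar i m)).
Proof.
  intros Hb Hom Hg Hd [Hpp [Hxb _]] i m n Hi Hm Hn r ri.
  set (t0 := pbar m).
  assert (Ht0 : 0 < t0) by (apply Hpp; lia).
  assert (Hgi : forall k, (k <= N)%nat -> good_period_utility (u i k)) by (intros; apply Hg; auto).
  assert (Hdi := Hd i Hi).
  set (P := fun k t => upd_price pbar m t k).
  set (X := fun k t => xi i (upd_price pbar m t) k).
  assert (Eup : upd_price pbar m t0 = pbar).
  { apply functional_extensionality. intros k. unfold upd_price. destruct (Nat.eqb_spec k m); subst; reflexivity. }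
  assert (HP0 : forall k, P k t0 = pbar k).
  { intros k. unfold P. rewrite Eup. reflexivity. }
  assert (HPt : forall k t, P k t = if Nat.eqb k m then t else pbar k) by reflexivity.
  assert (Hpos : forall t, 0 < t -> pos_prices N (upd_price pbar m t)).
  { intros t Ht k Hk. unfold upd_price. destruct (Nat.eqb_spec k m). lra. apply Hpp; auto. }
  assert (HX : forall t, 0 < t -> forall k, (k <= N)%nat -> 0 < X k t).
  { intros t Ht k Hk. apply (proj1 (Hdi _ (Hpos t Ht))). auto. }
  assert (Hfoc : forall t, 0 < t -> forall k, (1 <= k <= N)%nat ->
     beta ^ k * Derive (u i k) (X k t) = P k t * Derive (u i 0%nat) (X 0%nat t)).
  { intros t Ht k Hk. apply (proj1 (foc N beta (u i) (omega i) (xi i) _ ltac:(lra) Hgi Hdi (Hpos t Ht))); auto. }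
  assert (Hbud : forall t, 0 < t -> X 0%nat t + sum1N N (fun k => P k t * X k t) =
        omega i 0%nat + sum1N N (fun k => P k t * omega i k)).
  { intros t Ht. apply (proj2 (foc N beta (u i) (omega i) (xi i) _ ltac:(lra) Hgi Hdi (Hpos t Ht))). }
  set (xb := fun k => X k t0).
  assert (Exb : forall k, (k <= N)%nat -> xbar i k = xb k).
  { intros k Hk. rewrite (Hxb i Hi k Hk). unfold xb, X. rewrite Eup. reflexivity. }
  set (lam := fun t => Derive (u i 0%nat) (X 0%nat t)).
  set (lb := lam t0).
  assert (Hlb : 0 < lb) by (apply gpos; [apply Hgi; lia| apply HX; auto; lia]).
  assert (Hbk : forall k, 0 < beta ^ k) by (intros; apply pow_lt; lra).
  assert (BD : forall t, 0 < t -> (X 0%nat t - xb 0%nat) + sum1N N (fun k => P k t * X k t - P k t0 * xb k)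
              = (t - t0) * omega i m).
  { intros t Ht. unfold sum1N. rewrite ssum_minus. pose proof (Hbud t Ht). pose proof (Hbud t0 Ht0).
    unfold sum1N in *. 
    assert (@eq R (sum_n_m (fun k => P k t * omega i k - P k t0 * omega i k) 1 N) ((t - t0) * omega i m)).
    { rewrite (ssum_single _ 1 N m Hm). rewrite !HPt, Nat.eqb_refl. unfold t0; ring.
      intros k _ Hk. rewrite !HPt. apply Nat.eqb_neq in Hk. rewrite Hk. ring. }
    rewrite ssum_minus in H1. unfold xb. lra. }
  assert (HP1 : forall k t, k <> m -> P k t = pbar k).
  { intros k t Hk. rewrite HPt. apply Nat.eqb_neq in Hk. now rewrite Hk. }
  assert (HPm : forall t, P m t = t). { intros t. rewrite HPt, Nat.eqb_refl. reflexivity. }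
  assert (Hgm := Hgi m ltac:(lia)). assert (Hg0 := Hgi 0%nat ltac:(lia)).
  assert (Hxbp : forall k, (k <= N)%nat -> 0 < xb k) by (intros; apply HX; auto).
  assert (Hfoc0 : forall k, (1 <= k <= N)%nat -> beta ^ k * Derive (u i k) (xb k) = pbar k * lb).
  { intros k Hk. rewrite <- HP0. apply Hfoc; auto. }
  assert (CX0 : continuity_pt (X 0%nat) t0).
  { apply (proj2 (cont_eps _ _)). intros e He.
    set (e' := e / (4 * t0)). assert (He' : 0 < e') by (apply Rdiv_lt_0_compat; lra).
    destruct (lemAB (u i m) Hgm (xb m) e' (Hxbp m ltac:(lia)) He') as [eta [Heta [HA HB]]].
    set (d := Rmin (t0/2) (Rmin (e / (2 * (Rabs (omega i m - xb m) + 1))) (eta * beta ^ m / (lb + 1)))).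
    assert (Hd1 : d <= t0/2) by apply Rmin_l.
    assert (Hd2 : d <= e / (2 * (Rabs (omega i m - xb m) + 1))) by (eapply Rle_trans; [apply Rmin_r|apply Rmin_l]).
    assert (Hd3 : d <= eta * beta ^ m / (lb + 1)) by (eapply Rle_trans; [apply Rmin_r|apply Rmin_r]).
    exists d. split.
    { repeat apply Rmin_pos; try lra. apply Rdiv_lt_0_compat; [lra|]. pose proof (Rabs_pos (omega i m - xb m)); lra.
      apply Rdiv_lt_0_compat; [|lra]. pose proof (Hbk m); nra. }
    intros t Ht.
    assert (Ht' : 0 < t) by (apply Rabs_def2 in Ht; lra).
    assert (Htb : t < 2 * t0) by (apply Rabs_def2 in Ht; lra).
    pose proof (small_prod (t - t0) (omega i m - xb m) e He ltac:(lra)) as Hs1.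
    apply Rabs_def2 in Hs1.
    pose proof (small_lin (t - t0) lb (beta ^ m) eta (Hbk m) ltac:(lra) ltac:(lra)) as Hs2.
    pose proof (Rle_abs (t - t0)) as Hh1. pose proof (Rabs_maj2 (t - t0)) as Hh2.
    pose proof (BD t Ht') as BDt. unfold sum1N in BDt.
    pose proof (Hfoc t Ht' m Hm) as Fm. rewrite HPm in Fm. pose proof (Hfoc0 m Hm) as Fm0. fold t0 in Fm0.
    fold (lam t) in Fm. 
    assert (HXm := HX t Ht' m ltac:(lia)). assert (HX0 := HX t Ht' 0%nat ltac:(lia)).
    assert (Hxb0 := Hxbp 0%nat ltac:(lia)). assert (Hxbm := Hxbp m ltac:(lia)).
    change (X 0%nat t0) with (xb 0%nat).
    destruct (Rle_lt_dec (xb 0%nat) (X 0%nat t)) as [Hc|Hc].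
    - assert (Hl : lam t <= lb) by (apply (v1_nonincr _ Hg0 (xb 0%nat) (X 0%nat t)); lra).
      assert (HT : (P m t * X m t - P m t0 * xb m) <= sum_n_m (fun k => P k t * X k t - P k t0 * xb k) 1 N).
      { apply (ssum_nonneg_but (fun k => P k t * X k t - P k t0 * xb k)); auto.
        intros k Hk Hkm. rewrite !HP1 by auto. pose proof (Hpp k Hk).
        destruct (Rle_lt_dec (xb k) (X k t)) as [Hk2|Hk2]. nra. exfalso.
        pose proof (v1_decr _ (Hgi k ltac:(lia)) (X k t) (xb k) ltac:(split; [apply HX; auto; lia|lra])).
        pose proof (Hfoc t Ht' k Hk) as Fk. pose proof (Hfoc0 k Hk) as Fk0. rewrite HP1 in Fk by auto. fold (lam t) in Fk.
        pose proof (Hbk k). nra. }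
      rewrite HPm, HP0 in HT. fold t0 in HT.
      assert (Hm2 : xb m - e' < X m t).
      { apply HA; auto. assert (beta ^ m * (Derive (u i m) (X m t) - Derive (u i m) (xb m)) < eta * beta ^ m).
        { assert (t * lam t <= t * lb) by (apply Rmult_le_compat_l; lra).
          assert ((t - t0) * lb <= Rabs (t - t0) * lb) by (apply Rmult_le_compat_r; lra). nra. }
        pose proof (Hbk m). nra. }
      assert (t * (xb m - X m t) < t * e') by (apply Rmult_lt_compat_l; lra).
      assert (t * e' <= e / 2). { apply Rle_trans with (2 * t0 * e'); [apply Rmult_le_compat_r; lra|]. right. unfold e'. field. lra. }
      apply Rabs_def1; lra.
    - assert (Hl : lb < lam t) by (apply (v1_decr _ Hg0 (X 0%nat t) (xb 0%nat)); lra).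
      assert (HT : - (P m t * X m t - P m t0 * xb m) <= sum_n_m (fun k => - (P k t * X k t - P k t0 * xb k)) 1 N).
      { apply (ssum_nonneg_but (fun k => - (P k t * X k t - P k t0 * xb k))); auto.
        intros k Hk Hkm. rewrite !HP1 by auto. pose proof (Hpp k Hk).
        destruct (Rle_lt_dec (X k t) (xb k)) as [Hk2|Hk2]. nra. exfalso.
        pose proof (v1_decr _ (Hgi k ltac:(lia)) (xb k) (X k t) ltac:(split; [apply Hxbp; lia|lra])).
        pose proof (Hfoc t Ht' k Hk) as Fk. pose proof (Hfoc0 k Hk) as Fk0. rewrite HP1 in Fk by auto. fold (lam t) in Fk.
        pose proof (Hbk k). nra. }
      rewrite (ssum_ext _ (fun k => (-1) * (P k t * X k t - P k t0 * xb k))) in HT by (intros; ring).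
      rewrite ssum_mult in HT.
      rewrite HPm, HP0 in HT. fold t0 in HT.
      assert (Hm2 : X m t < xb m + e').
      { apply HB; auto. assert (- eta * beta ^ m < beta ^ m * (Derive (u i m) (X m t) - Derive (u i m) (xb m))).
        { assert (t * lb <= t * lam t) by (apply Rmult_le_compat_l; lra).
          assert (- (Rabs (t - t0) * lb) <= (t - t0) * lb) by (apply Rabs_def2 in Ht; nra). nra. }
        pose proof (Hbk m). nra. }
      assert (t * (X m t - xb m) < t * e') by (apply Rmult_lt_compat_l; lra).
      assert (t * e' <= e / 2). { apply Rle_trans with (2 * t0 * e'); [apply Rmult_le_compat_r; lra|]. right. unfold e'. field. lra. }
      apply Rabs_def1; lra. }
  assert (Clam : continuity_pt lam t0).
  { apply (cp_comp (X 0%nat) (Derive (u i 0%nat))); auto. apply (gcont1 _ Hg0). apply Hxbp; lia. }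
  assert (CP : forall k, continuity_pt (P k) t0).
  { intros k. destruct (Nat.eq_dec k m) as [->|Hk].
    - apply (cp_local _ (fun t => t) t0 1). lra. intros; apply HPm. apply continuity_pt_id.
    - apply (cp_local _ (fun _ => pbar k) t0 1). lra. intros; apply HP1; auto. apply cp_const. }
  assert (CX : forall k, (k <= N)%nat -> continuity_pt (X k) t0).
  { intros k Hk. destruct (Nat.eq_dec k 0) as [->|Hk0]; auto.
    apply (proj2 (cont_eps _ _)). intros e He.
    destruct (lemAB (u i k) (Hgi k Hk) (xb k) e (Hxbp k Hk) He) as [eta [Heta [HA HB]]].
    set (g := fun t => P k t * lam t / beta ^ k).
    assert (Cg : continuity_pt g t0).
    { apply cp_div. apply cp_mult; auto. apply cp_const. pose proof (Hbk k); lra. }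
    destruct (proj1 (cont_eps _ _) Cg eta Heta) as [d1 [Hd1 Hg1]].
    exists (Rmin d1 (t0/2)). split. apply Rmin_pos; lra. intros t Ht.
    pose proof (Rmin_l d1 (t0/2)). pose proof (Rmin_r d1 (t0/2)).
    assert (Ht' : 0 < t) by (apply Rabs_def2 in Ht; lra).
    assert (E1 : forall s, 0 < s -> Derive (u i k) (X k s) = g s).
    { intros s Hs. unfold g. pose proof (Hfoc s Hs k ltac:(lia)). pose proof (Hbk k).
      fold (lam s) in H1. field_simplify; [|lra]. rewrite <- H1. field. lra. }
    specialize (Hg1 t ltac:(lra)). rewrite <- !E1 in Hg1 by auto. apply Rabs_def2 in Hg1.
    unfold xb in HA, HB. pose proof (HA (X k t) (HX t Ht' k Hk) ltac:(lra)). pose proof (HB (X k t) (HX t Ht' k Hk) ltac:(lra)).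
    apply Rabs_def1; unfold xb in *; lra. }
  set (D := fun k t => q (u i k) (xb k) (X k t)).
  assert (CD : forall k, (k <= N)%nat -> continuity_pt (D k) t0).
  { intros k Hk. apply (cp_comp (X k) (q (u i k) (xb k))); auto. apply q_cont; auto. }
  assert (HD0 : forall k, D k t0 = Derive_n (u i k) 2 (xb k)).
  { intros k. unfold D, q. change (X k t0) with (xb k). destruct (Req_EM_T (xb k) (xb k)); [reflexivity|congruence]. }
  assert (HDneg : forall k t, (k <= N)%nat -> 0 < t -> D k t < 0).
  { intros k t Hk Ht. apply q_neg; auto. }
  set (ek := fun k => if Nat.eqb k m then 1 else 0).
  assert (HPe : forall k t, P k t = P k t0 + ek k * (t - t0)).
  { intros k t. unfold ek. rewrite !HPt. destruct (Nat.eqb_spec k m). subst; unfold t0; ring. ring. }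
  set (S := fun t => 1 / D 0%nat t + sum_n_m (fun k => P k t * P k t / (beta ^ k * D k t)) 1 N).
  set (L := fun t => (omega i m - xb m - t * lb / (beta ^ m * D m t)) / S t).
  set (G := fun t => (P n t * L t + ek n * lb) / (beta ^ n * D n t)).
  assert (HSneg : forall t, 0 < t -> S t < 0).
  { intros t Ht. unfold S. pose proof (HDneg 0%nat t ltac:(lia) Ht).
    assert (1 / D 0%nat t < 0). { unfold Rdiv. rewrite Rmult_1_l. apply Rinv_lt_0_compat; auto. }
    assert (0 <= sum_n_m (fun k => (-1) * (P k t * P k t / (beta ^ k * D k t))) 1 N).
    { apply ssum_nonneg_loc. intros k Hk. pose proof (HDneg k t ltac:(lia) Ht). pose proof (Hbk k).
      assert (beta ^ k * D k t < 0) by nra.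
      assert (0 <= P k t * P k t) by nra.
      assert (P k t * P k t / (beta ^ k * D k t) <= 0).
      { unfold Rdiv. pose proof (Rinv_lt_0_compat _ H3). nra. }
      lra. }
    rewrite ssum_mult in H1. lra. }
  assert (Iden : forall t, 0 < t -> t <> t0 -> (X n t - X n t0) / (t - t0) = G t).
  { intros t Ht Hne.
    set (h := t - t0). set (Lam := lam t - lb).
    assert (Hh : h <> 0) by (unfold h; lra).
    assert (HL0 : Lam = D 0%nat t * (X 0%nat t - xb 0%nat)).
    { unfold Lam, lam, lb, lam, D. change (X 0%nat t0) with (xb 0%nat). apply q_eq. }
    assert (HDk : forall k, (1 <= k <= N)%nat -> X k t - xb k = (P k t * Lam + ek k * h * lb) / (beta ^ k * D k t)).
    { intros k Hk. pose proof (HDneg k t ltac:(lia) Ht). pose proof (Hbk k).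
      assert (E : beta ^ k * D k t * (X k t - xb k) = P k t * Lam + ek k * h * lb).
      { rewrite Rmult_assoc. unfold D. rewrite <- q_eq. rewrite Rmult_minus_distr_l.
        rewrite (Hfoc t Ht k Hk), (Hfoc0 k Hk). fold (lam t). unfold Lam, h.
        rewrite (HPe k t), HP0. ring. }
      rewrite <- E. field. split; lra. }
    assert (HT : forall k, (1 <= k <= N)%nat -> P k t * X k t - P k t0 * xb k =
        Lam * (P k t * P k t / (beta ^ k * D k t)) + h * (ek k * (P k t * lb / (beta ^ k * D k t) + xb k))).
    { intros k Hk. pose proof (HDneg k t ltac:(lia) Ht). pose proof (Hbk k).
      assert (E : P k t0 = P k t - ek k * h) by (unfold h; rewrite (HPe k t); ring).
      rewrite E. replace (X k t) with (xb k + (X k t - xb k)) by ring. rewrite (HDk k Hk).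
      field. split; lra. }
    pose proof (BD t Ht) as BDt. unfold sum1N in BDt.
    rewrite (ssum_ext _ (fun k => Lam * (P k t * P k t / (beta ^ k * D k t)) + h * (ek k * (P k t * lb / (beta ^ k * D k t) + xb k)))) in BDt by exact HT.
    rewrite ssum_plus, !ssum_mult in BDt.
    rewrite (ssum_single (fun k => ek k * (P k t * lb / (beta ^ k * D k t) + xb k)) 1 N m Hm) in BDt.
    2:{ intros k _ Hk. cbv beta. unfold ek. apply Nat.eqb_neq in Hk. rewrite Hk. ring. }
    unfold ek at 1 in BDt. rewrite Nat.eqb_refl, HPm in BDt.
    pose proof (HDneg 0%nat t ltac:(lia) Ht) as HD0t. pose proof (HSneg t Ht) as HSt.
    assert (E0 : X 0%nat t - xb 0%nat = Lam / D 0%nat t) by (rewrite HL0; field; lra).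
    rewrite E0 in BDt. fold h in BDt.
    assert (ELS : Lam * S t = h * (omega i m - xb m - t * lb / (beta ^ m * D m t))).
    { unfold S. pose proof (HDneg m t ltac:(lia) Ht). pose proof (Hbk m).
      assert (beta ^ m * D m t <> 0) by nra.
      assert (Hs : exists s1 : R, sum_n_m (fun k => P k t * P k t / (beta ^ k * D k t)) 1 N = s1) by (eexists; reflexivity).
      destruct Hs as [s0 Hs0]. rewrite Hs0 in BDt |- *.
      field_simplify_eq in BDt. { repeat split; intro; lra. }
      field_simplify_eq. { lra. } { repeat split; intro; lra. } }
    assert (ELam : Lam = h * L t).
    { unfold L. apply (Rmult_eq_reg_r (S t)); [|lra]. rewrite ELS. pose proof (HDneg m t ltac:(lia) Ht). pose proof (Hbk m). field. repeat split; intro; nra. }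
    change (X n t0) with (xb n). rewrite (HDk n Hn), ELam. unfold G.
    pose proof (HDneg n t ltac:(lia) Ht). pose proof (Hbk n). fold h. field. split; [lra|split; lra]. }
  assert (HDz : forall k, (k <= N)%nat -> D k t0 <> 0) by (intros k Hk; pose proof (HDneg k t0 Hk Ht0); lra).
  assert (CS : continuity_pt S t0).
  { unfold S. apply cp_plus. apply cp_div. apply cp_const. apply CD; lia. apply HDz; lia.
    apply (cp_sum (fun k t => P k t * P k t / (beta ^ k * D k t))). intros k Hk.
    apply cp_div. apply cp_mult; apply CP. apply cp_mult. apply cp_const. apply CD; lia.
    pose proof (Hbk k). pose proof (HDneg k t0 ltac:(lia) Ht0). nra. }
  assert (HSz : S t0 <> 0) by (pose proof (HSneg t0 Ht0); lra).
  assert (CL : continuity_pt L t0).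
  { unfold L. apply cp_div; auto. apply cp_minus. apply cp_const. apply cp_div. apply cp_mult. apply continuity_pt_id. apply cp_const.
    apply cp_mult. apply cp_const. apply CD; lia. pose proof (Hbk m). pose proof (HDneg m t0 ltac:(lia) Ht0). nra. }
  assert (CG : continuity_pt G t0).
  { unfold G. apply cp_div. apply cp_plus. apply cp_mult; auto. apply cp_const.
    apply cp_mult. apply cp_const. apply CD; lia. pose proof (Hbk n). pose proof (HDneg n t0 ltac:(lia) Ht0). nra. }
  assert (Gval : G t0 = (r m * r n / ri - (if Nat.eqb m n then r n / pbar n else 0))
       + r n / ri * (omega i m - xbar i m)).
  { assert (Hr : forall k, (k <= N)%nat -> r k = Derive (u i k) (xb k) / (- Derive_n (u i k) 2 (xb k))).
    { intros k Hk. unfold r, rr. rewrite Exb by auto. reflexivity. }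
    assert (Hrp : forall k, (k <= N)%nat -> 0 < r k).
    { intros k Hk. rewrite Hr by auto. apply Rdiv_lt_0_compat.
      apply gpos; auto. pose proof (gneg _ (Hgi k Hk) (xb k) (Hxbp k Hk)). lra. }
    assert (Ha : forall k, (1 <= k <= N)%nat -> Derive (u i k) (xb k) = pbar k * lb / beta ^ k).
    { intros k Hk. rewrite <- (Hfoc0 k Hk). field. pose proof (Hbk k); lra. }
    assert (HS0 : S t0 = - ri / lb).
    { unfold S, ri, sum1N. rewrite HD0.
      rewrite (ssum_ext _ (fun k => (- / lb) * (pbar k * r k))).
      - rewrite ssum_mult. rewrite (Hr 0%nat) by lia. fold lb.
        pose proof (gneg _ Hg0 (xb 0%nat) (Hxbp 0%nat ltac:(lia))). assert (Hs : exists s1 : R, sum_n_m (fun k => pbar k * r k) 1 N = s1) by (eexists; reflexivity). destruct Hs as [s1 Hs1]. rewrite Hs1. change (Derive (u i 0%nat) (xb 0%nat)) with lb. field. split; lra.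
      - intros k Hk. rewrite HD0, HP0, Hr by lia. rewrite Ha by lia.
        pose proof (gneg _ (Hgi k ltac:(lia)) (xb k) (Hxbp k ltac:(lia))). pose proof (Hbk k).
        pose proof (Hpp k Hk). field. repeat split; lra. }
    assert (Hrip : 0 < ri).
    { pose proof (HSneg t0 Ht0). rewrite HS0 in H. 
      assert (- ri = - ri / lb * lb) by (field; lra). nra. }
    assert (Hmr : t0 * lb / (beta ^ m * Derive_n (u i m) 2 (xb m)) = - r m).
    { rewrite Hr by lia. rewrite Ha by lia. fold t0.
      pose proof (gneg _ Hgm (xb m) (Hxbp m ltac:(lia))). pose proof (Hbk m). field. repeat split; lra. }
    assert (Hnr : beta ^ n * Derive_n (u i n) 2 (xb n) = - pbar n * lb / r n).
    { pose proof (Hrp n ltac:(lia)). rewrite Hr in H |- * by lia. rewrite Ha in H |- * by lia.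
      pose proof (gneg _ (Hgi n ltac:(lia)) (xb n) (Hxbp n ltac:(lia))). pose proof (Hbk n).
      pose proof (Hpp n Hn). field. repeat split; try lra. }
    unfold G, L. rewrite !HD0, HS0, HP0, Hmr, Hnr, (Exb m) by lia.
    pose proof (Hrp n ltac:(lia)). pose proof (Hpp n Hn).
    unfold ek. rewrite Nat.eqb_sym. destruct (Nat.eqb m n); field; repeat split; lra. }
  apply is_derive_Reals. intros eps Heps.
  destruct (proj1 (cont_eps _ _) CG eps Heps) as [d [Hdpos Hdd]].
  assert (Hdp : 0 < Rmin d (t0/2)) by (apply Rmin_pos; lra).
  exists (mkposreal _ Hdp). intros h Hh0 Hh. simpl in Hh.
  pose proof (Rmin_l d (t0/2)). pose proof (Rmin_r d (t0/2)).
  apply Rabs_def2 in Hh as Hh'.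
  pose proof (Iden (t0 + h) ltac:(lra) ltac:(lra)) as I1.
  replace (t0 + h - t0) with h in I1 by ring.
  change (Rabs ((X n (t0 + h) - X n t0) / h - ((r m * r n / ri - (if Nat.eqb m n then r n / pbar n else 0))
       + r n / ri * (omega i m - xbar i m))) < eps).
  rewrite I1, <- Gval. apply Hdd. replace (t0 + h - t0) with h by ring. lra.
Qed.
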